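(* Let $X$ be a real normed space, $f:X\to\mathbb R\cup\{+\infty\}$ proper, $\bar x\in(\partial f)^{-1}(0)$, and $p,q\in(1,\infty)$ with $p^{-1}+q^{-1}=1$. Suppose $(\partial f)^{-1}:X^*\rightrightarrows X$ is lower hemicontinuous at $0$. Then the following are equivalent: (i) there exist $\delta\in(0,+\infty]$ and $\gamma\in(0,+\infty)$ such that $f(x)\ge f(\bar x)+\gamma\|x-\bar x\|^p$ for all $x\in\mathbb B(\bar x,\delta)$; (ii) $\partial f:X\rightrightarrows X^*$ is strongly $\frac qp$-subregular at $\bar x$ (for some parameters $\alpha\in(0,+\infty]$, $\kappa\in(0,+\infty)$).
   Context: $\partial f(x):=\{\xi\in X^*: x\text{ is a global minimizer of } f-\langle\xi,\cdot\rangle\}$; $(\partial f)^{-1}(\xi)=\{x:\xi\in\partial f(x)\}$. $\mathbb B(x,+\infty)=X$. A set-valued map $\mathcal F:X\rightrightarrows Y$ is lower hemicontinuous at $\bar y$ if for every open $V$ with $\mathcal F(\bar y)\cap V\ne\emptyset$ there is a neighborhood $U$ of $\bar y$ with $\mathcal F(y)\cap V\neq\emptyset$ for all $y\in U$. $\mathcal F$ is strongly $\lambda$-subregular at $\bar x\in\mathcal F^{-1}(0)$ with parameters $\alpha\in(0,+\infty]$, $\kappa\in(0,+\infty)$ if $\|x-\bar x\|\le\kappa\, d(0,\mathcal F(x))^\lambda$ for all $x\in\mathbb B(\bar x,\alpha)$, where $d(0,\mathcal F(x))=\inf\{\|y\|:y\in\mathcal F(x)\}$. *)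

(* Defs.v *)
From HB Require Import structures.
From mathcomp Require Import all_boot all_order all_algebra.
From mathcomp Require Import all_classical all_reals all_analysis.
Set Implicit Arguments. Unset Strict Implicit. Unset Printing Implicit Defensive.
Import Order.TTheory GRing.Theory Num.Theory.
Import numFieldNormedType.Exports.
Local Open Scope classical_set_scope.
Local Open Scope ring_scope.

Section Defs.
Context {R : realType} {X : normedModType R}.

Definition is_dual (xi : X -> R) : Prop :=
  linear xi /\ continuous xi.

Definition dnorm (xi : X -> R) : R :=
  sup [set `|xi x| | x in [set x : X | `|x| <= 1]].

Definition subdiff (f : X -> \bar R) (x : X) : set (X -> R) :=
  [set xi | is_dual xi /\
     forall y : X, (f x - (xi x)%:E <= f y - (xi y)%:E)%E].

Definition subdiff_inv (f : X -> \bar R) (xi : X -> R) : set X :=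
  [set x | subdiff f x xi].

Definition proper_fun (f : X -> \bar R) : Prop :=
  (forall x, (f x != -oo)%E) /\ (exists x, (f x != +oo)%E).

Definition lhc_at0 (G : (X -> R) -> set X) : Prop :=
  forall V : set X, open V -> G (fun _ => 0) `&` V !=set0 ->
    exists2 eps : R, 0 < eps &
      forall xi, is_dual xi -> dnorm xi < eps -> G xi `&` V !=set0.

Definition eball (xbar : X) (delta : \bar R) : set X :=
  [set x | ((`|x - xbar|)%:E <= delta)%E].

(* d(0, F x) = inf { ||y||_* : y ∈ F x } (= +oo if F x is empty) *)
Definition dist0 (F : X -> set (X -> R)) (x : X) : \bar R :=
  ereal_inf [set (dnorm xi)%:E | xi in F x].

Definition strongly_subregular (F : X -> set (X -> R)) (lam : R) (xbar : X)
    (alpha : \bar R) (kappa : R) : Prop :=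
  F xbar (fun _ => 0) /\ (0 < alpha)%E /\ 0 < kappa /\
  forall x, eball xbar alpha x ->
    ((`|x - xbar|)%:E <= kappa%:E * poweR (dist0 F x) lam)%E.

End Defs.

(* Main.v *)
Require Import Defs.
From HB Require Import structures.
From mathcomp Require Import all_boot all_order all_algebra.
From mathcomp Require Import all_classical all_reals all_analysis.
From mathcomp Require Import ring lra.
Import Order.TTheory GRing.Theory Num.Theory.
Import numFieldNormedType.Exports.
Local Open Scope classical_set_scope.
Local Open Scope ring_scope.
Section S.
Context {R : realType} {X : normedModType R}.

Lemma dual_bound (xi : X -> R) : is_dual xi ->
  0 <= dnorm xi /\ forall y, `|xi y| <= dnorm xi * `|y|.
Proof.
case=> lin cont.
pose g : {linear X -> R} := HB.pack xi (GRing.isLinear.Build _ _ _ _ xi lin).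
have : bounded_near g (nbhs 0) by apply/linear_bounded_continuous.
move=> /linear_boundedP [M [Mr HM]].
have hM : M < `|M| + 1 by rewrite (le_lt_trans (real_ler_norm Mr)) // ltrDl ltr01.
have HM' := HM _ hM.
have xi0 : xi 0 = 0 by exact: (linear0 g).
set S := [set `|xi x| | x in [set x : X | `|x| <= 1]].
have hub : has_ubound S.
  exists (`|M| + 1) => _ [x x1 <-].
  apply: (le_trans (HM' x)). 
  by rewrite ler_piMr // addr_ge0.
have S0 : S 0 by exists 0; rewrite ?normr0 ?xi0 ?normr0 //= normr0.
have ubS := ub_le_sup hub.
have d0 : 0 <= dnorm xi by exact: ubS _ S0.
split => // y.
have [->|y0] := eqVneq y 0; first by rewrite xi0 !normr0 mulr0.
have ny0 : 0 < `|y| by rewrite normr_gt0.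
have : S `|xi (`|y|^-1 *: y)|.
  by exists (`|y|^-1 *: y) => //=; rewrite normrZ normfV normr_id mulVf ?gt_eqF.
have -> : xi (`|y|^-1 *: y) = `|y|^-1 * xi y.
  by have := lin (`|y|^-1) y 0; rewrite !addr0 xi0 addr0.
move=> /ubS; rewrite normrM normfV normr_id.
by rewrite mulrC ler_pdivrMr.
Qed.

Lemma dual_of_lip (xi : X -> R) (M : R) :
  (forall a u w, xi (a *: u + w) = a * xi u + xi w) -> 0 <= M ->
  (forall y, `|xi y| <= M * `|y|) -> is_dual xi /\ dnorm xi <= M.
Proof.
move=> lin M0 Hb.
have lin' : linear xi by [].
pose g : {linear X -> R} := HB.pack xi (GRing.isLinear.Build _ _ _ _ xi lin').
split.
  split => //; apply: (@bounded_linear_continuous _ _ _ g).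
  apply/linear_boundedP; near=> r => x.
  rewrite (le_trans (Hb x)) // ler_wpM2r ?normr_ge0 //; near: r.
apply: ge_sup.
  by exists `|xi 0|, 0 => //=; rewrite normr0.
move=> _ [x x1 <-]; apply: (le_trans (Hb x)).
by rewrite ler_piMr.
Unshelve. all: by end_near. Qed.

Definition goodG (v : X) (G : set (X * R)) :=
 [/\ G (v, `|v|),
   (forall x a y b, G (x,a) -> G (y,b) -> G (x+y, a+b)),
   (forall t x a, G (x,a) -> G (t*:x, t*a)) &
   (forall x a, G (x,a) -> a <= `|x|)].

Lemma goodG0 v G : goodG v G -> G (0, 0).
Proof.
case=> Gv _ Gs _; have := Gs 0 _ _ Gv; by rewrite scale0r mul0r.
Qed.

Lemma goodG_fun v G x a b : goodG v G -> G (x, a) -> G (x, b) -> a = b.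
Proof.
move=> gG; case: (gG) => _ Ga Gs Gb xa xb.
have h1 := Gb _ _ (Ga _ _ _ _ xa (Gs (-1) _ _ xb)).
have h2 := Gb _ _ (Ga _ _ _ _ xb (Gs (-1) _ _ xa)).
rewrite scaleN1r subrr normr0 mulN1r subr_le0 in h1.
rewrite scaleN1r subrr normr0 mulN1r subr_le0 in h2.
by apply/eqP; rewrite eq_le h1 h2.
Qed.

Lemma goodG_ext v A z : goodG v A -> ~ (exists a, A (z, a)) ->
  exists B, goodG v B /\ A `<` B.
Proof.
move=> gA nz; have A00 := goodG0 _ _ gA.
case: (gA) => Av Aa As Ab.
have key x a y b : A (x, a) -> A (y, b) -> a - `|x - z| <= `|y + z| - b.
  move=> xa yb; rewrite lerBrDr addrAC lerBlDr.
  apply: (le_trans (Ab _ _ (Aa _ _ _ _ xa yb))).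
  have -> : x + y = (x - z) + (y + z) by rewrite addrACA addNr addr0.
  by rewrite [leRHS]addrC; exact: ler_normD.
pose S := [set r | exists x a, A (x, a) /\ r = a - `|x - z|].
have S0 : S !=set0 by exists (0 - `|0 - z|), 0, 0.
have hub : has_ubound S.
  by exists (`|0 + z| - 0) => _ [x [a [xa ->]]]; exact: key.
pose c := sup S.
have cub x a : A (x, a) -> a - `|x - z| <= c.
  by move=> xa; apply: (ub_le_sup hub); exists x, a.
have clb y b : A (y, b) -> c <= `|y + z| - b.
  by move=> yb; apply: ge_sup => // _ [x [a [xa ->]]]; exact: key.
pose B := [set pr | exists x a t, A (x, a) /\ pr = (x + t *: z, a + t * c)].
exists B; split; last first.
  split.
    by move=> [x a] xa; exists x, a, 0; rewrite scale0r mul0r !addr0.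
  move=> /(_ (z, c)) BA; apply: nz; exists c; apply: BA.
  by exists 0, 0, 1; rewrite scale1r mul1r !add0r.
split.
- by exists v, `|v|, 0; rewrite scale0r mul0r !addr0.
- move=> x a y b [x1 [a1 [t1 [xa1 [-> ->]]]]] [x2 [a2 [t2 [xa2 [-> ->]]]]].
  exists (x1 + x2), (a1 + a2), (t1 + t2); split; first exact: Aa.
  by rewrite scalerDl mulrDl; congr (_, _); exact: addrACA.
- move=> t x a [x1 [a1 [t1 [xa1 [-> ->]]]]].
  exists (t *: x1), (t * a1), (t * t1); split; first exact: As.
  by rewrite scalerDr scalerA mulrDr mulrA.
- move=> x a [x1 [a1 [t1 [xa1 [-> ->]]]]].
  have [t0|t0|->] := ltgtP t1 0; last by rewrite scale0r mul0r !addr0; exact: Ab.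
  +
    set s := - t1; have s0 : 0 < s by rewrite oppr_gt0.
    have e : s * `|s^-1 *: x1 - z| = `|x1 + t1 *: z|.
      rewrite -[X in X * _](gtr0_norm s0) -normrZ scalerBr scalerA mulfV ?gt_eqF //.
      by rewrite scale1r /s scaleNr opprK.
    have := cub _ _ (As s^-1 _ _ xa1).
    rewrite -(ler_pM2l s0) mulrBr mulrA mulfV ?gt_eqF // mul1r e /s mulNr.
    by rewrite lerBlDr -lerBlDl opprK addrC.
  +
    have e : t1 * `|t1^-1 *: x1 + z| = `|x1 + t1 *: z|.
      rewrite -[X in X * _](gtr0_norm t0) -normrZ scalerDr scalerA mulfV ?gt_eqF //.
      by rewrite scale1r.
    have := clb _ _ (As t1^-1 _ _ xa1).
    rewrite -(ler_pM2l t0) mulrBr mulrA mulfV ?gt_eqF // mul1r e.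
    by rewrite lerBrDr addrC.
Qed.

Lemma hahn_banach_norming (v : X) : exists xi : X -> R,
  [/\ (forall a u w, xi (a *: u + w) = a * xi u + xi w),
      (forall y, `|xi y| <= `|y|) & xi v = `|v|].
Proof.
pose P (G : set (X * R)) := G = set0 \/ goodG v G.
have [A [PA Amax]] : exists A, P A /\ forall B, A `<` B -> ~ P B.
  apply: Zorn_bigcup => F FP Ftot.
  have [[G0 [FG0 gG0]]|nG] := pselect (exists G, F G /\ goodG v G); last first.
    left; apply/seteqP; split => // pr [G FG Gpr].
    case: (FP G FG) => [G00|gG]; first by rewrite G00 in Gpr.
    by exfalso; apply: nG; exists G.
  have gF G pr : F G -> G pr -> goodG v G.
    by move=> FG Gpr; case: (FP G FG) => // G00; rewrite G00 in Gpr.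
  right; split.
  - by exists G0 => //; case: gG0.
  - move=> x a y b [G1 FG1 G1x] [G2 FG2 G2y].
    case: (Ftot _ _ FG1 FG2) => [G12|G21].
    + exists G2 => //; case: (gF _ _ FG2 G2y) => _ Ga _ _; apply: Ga => //.
      exact: G12.
    + exists G1 => //; case: (gF _ _ FG1 G1x) => _ Ga _ _; apply: Ga => //.
      exact: G21.
  - move=> t x a [G FG Gx]; exists G => //.
    by case: (gF _ _ FG Gx) => _ _ Gs _; apply: Gs.
  - move=> x a [G FG Gx].
    by case: (gF _ _ FG Gx) => _ _ _ Gb; apply: Gb.
pose G0 := [set pr : X * R | exists t : R, pr = (t *: v, t * `|v|)].
have gG0 : goodG v G0.
  split.
  - by exists 1; rewrite scale1r mul1r.
  - move=> x a y b [t1 [-> ->]] [t2 [-> ->]].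
    by exists (t1 + t2); rewrite scalerDl mulrDl.
  - move=> t x a [t1 [-> ->]]; exists (t * t1).
    by rewrite scalerA mulrA.
  - move=> x a [t1 [-> ->]]; rewrite normrZ ler_wpM2r //.
    exact: ler_norm.
have gA : goodG v A.
  case: PA => // A0; exfalso; apply: (Amax G0); last by right.
  rewrite A0; split => // /(_ (v, `|v|)) h.
  by case: gG0 => /h.
have tot z : exists a, A (z, a).
  apply: contrapT => nz.
  have [B [gB AB]] := goodG_ext _ _ _ gA nz.
  by apply: (Amax B AB); right.
have [xi Hxi] := choice tot.
case: (gA) => Av Aa As Ab.
have uniq x a : A (x, a) -> xi x = a.
  by move=> xa; apply: (goodG_fun _ _ _ _ _ gA (Hxi x) xa).
exists xi; split.
- move=> a u w; apply: uniq; apply: Aa; last exact: Hxi.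
  exact: As (Hxi u).
- move=> y; rewrite ler_norml; apply/andP; split; last exact: Ab (Hxi y).
  have := Ab _ _ (As (-1) _ _ (Hxi y)).
  by rewrite scaleN1r normrN mulN1r lerNl.
- exact: uniq.
Qed.

Lemma norming (v : X) (t : R) : 0 <= t ->
  exists xi, [/\ is_dual xi, dnorm xi <= t & xi v = t * `|v|].
Proof.
move=> t0; have [xi [lin nb xv]] := hahn_banach_norming v.
have [dual dn] : is_dual (fun y => t * xi y) /\ dnorm (fun y => t * xi y) <= t.
  apply: dual_of_lip => //.
    by move=> a u w; rewrite lin mulrDr mulrCA.
  by move=> y; rewrite normrM ger0_norm // ler_wpM2l.
by exists (fun y => t * xi y); split => //=; rewrite xv.
Qed.

Lemma dual_sub (xi : X -> R) x y : is_dual xi -> xi (x - y) = xi x - xi y.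
Proof.
case=> lin _; have := lin (-1) y x.
by rewrite !scaleN1r [- y + x]addrC [- xi y + xi x]addrC.
Qed.
End S.

Lemma ereal_fin_min (R : realType) (X : normedModType R) (f : X -> \bar R) xbar :
  proper_fun f -> subdiff_inv f (fun _ => 0) xbar ->
  exists fb, f xbar = fb%:E.
Proof.
case=> nmo [y fy] [_ H0]; have := H0 y; rewrite /= !sube0.
case E: (f xbar) => [fb| |]; [by exists fb | | by move: (nmo xbar); rewrite E].
by rewrite leye_eq => /eqP fyy; rewrite fyy in fy.
Qed.

Lemma dir12 (R : realType) (X : normedModType R)
  (f : X -> \bar R) (xbar : X) (p q : R) :
  proper_fun f ->
  subdiff_inv f (fun _ => 0) xbar ->
  1 < p -> 1 < q -> p^-1 + q^-1 = 1 ->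
  (exists (delta : \bar R) (gamma : R),
      (0 < delta)%E /\ 0 < gamma /\
      forall x, eball xbar delta x ->
        (f x >= f xbar + (gamma * powR (`|x - xbar|) p)%:E)%E) ->
   (exists (alpha : \bar R) (kappa : R),
      strongly_subregular (subdiff f) (q / p) xbar alpha kappa).
Proof.
move=> hprop H0 p1 q1 pq [delta [gam [d0 [g0 Hi]]]].
have [fb efb] := ereal_fin_min _ _ _ _ hprop H0.
have p0 : 0 < p by apply: lt_trans p1.
have q0 : 0 < q by apply: lt_trans q1.
have lam0 : 0 < q / p by rewrite divr_gt0.
have hpq : (p - 1) * (q / p) = 1.
  have : p * q * (p^-1 + q^-1) = p * q by rewrite pq mulr1.
  rewrite mulrDr mulrAC mulfV ?gt_eqF // mul1r -mulrA mulfV ?gt_eqF // mulr1 => e.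
  by rewrite mulrA mulrBl mul1r -e [q + p]addrC addrK divff // gt_eqF.
exists delta, ((gam^-1) `^ (q / p)); split; first exact: H0.
split => //; split; first by rewrite powR_gt0 // invr_gt0.
move=> x hx; set r := `|x - xbar|.
have r0 : 0 <= r by rewrite /r normr_ge0.
have lb xi : subdiff f x xi -> gam * r `^ (p - 1) <= dnorm xi.
  case=> dual Hmin; have [dn0 db] := dual_bound _ dual.
  have := Hmin xbar; have := Hi x hx; rewrite efb.
  case E: (f x) => [fx| |]; last by rewrite leeNy_eq.
  - rewrite -EFinD !lee_fin => h1 h2.
    have h3 : gam * r `^ p <= dnorm xi * r.
      apply: le_trans (le_trans (ler_norm _) (db _)).
      rewrite dual_sub //; lra.
    have [r00|rp] := eqVneq r 0.
      by rewrite r00 powR0 ?mulr0 // subr_eq0 gt_eqF.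
    have rp' : 0 < r by rewrite lt_neqAle eq_sym rp r0.
    by rewrite -(ler_pM2r rp') -mulrA [_ `^ _ * r]mulrC mulr_powRB1.
  - by move=> _; rewrite -EFinD /= leNgt ltey.
have Dlb : ((gam * r `^ (p - 1))%:E <= dist0 (subdiff f) x)%E.
  by apply: le_ereal_inf_tmp => _ [xi Hxi <-]; rewrite lee_fin; exact: lb.
case E: (dist0 (subdiff f) x) => [d| |]; last by rewrite E in Dlb.
- rewrite poweR_EFin lee_fin; rewrite E lee_fin in Dlb.
  have L0 : 0 <= gam * r `^ (p - 1) by apply: mulr_ge0; [exact: ltW | exact: powR_ge0].
  apply: le_trans (ler_wpM2l (powR_ge0 _ _) (ge0_ler_powR (ltW lam0) _ _ Dlb)); rewrite ?nnegrE ?(le_trans L0) //.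
  have gi : 0 <= gam^-1 by rewrite invr_ge0 ltW.
  rewrite -(powRM _ gi L0) mulrA mulVf ?gt_eqF // mul1r.
  by rewrite -powRrM hpq powRr1.
- by rewrite poweRyr ?gt_eqF // gt0_muley ?lte_fin ?powR_gt0 ?invr_gt0 // leey.
Qed.


Lemma dir21 (R : realType) (X : normedModType R)
  (f : X -> \bar R) (xbar : X) (p q : R) :
  proper_fun f ->
  subdiff_inv f (fun _ => 0) xbar ->
  1 < p -> 1 < q -> p^-1 + q^-1 = 1 ->
  lhc_at0 (subdiff_inv f) ->
   (exists (alpha : \bar R) (kappa : R),
      strongly_subregular (subdiff f) (q / p) xbar alpha kappa) ->
  (exists (delta : \bar R) (gamma : R),
      (0 < delta)%E /\ 0 < gamma /\
      forall x, eball xbar delta x ->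
        (f x >= f xbar + (gamma * powR (`|x - xbar|) p)%:E)%E).
Proof.
move=> hprop H0 p1 q1 pq lhc [alpha [kap [_ [a0 [k0 Hsr]]]]].
have [fb efb] := ereal_fin_min _ _ _ _ hprop H0.
have p0 : 0 < p by apply: lt_trans p1.
have q0 : 0 < q by apply: lt_trans q1.
have lam0 : 0 < q / p by rewrite divr_gt0.
have hpq : (p - 1) * (q / p) = 1.
  have : p * q * (p^-1 + q^-1) = p * q by rewrite pq mulr1.
  rewrite mulrDr mulrAC mulfV ?gt_eqF // mul1r -mulrA mulfV ?gt_eqF // mulr1 => e.
  by rewrite mulrA mulrBl mul1r -e [q + p]addrC addrK divff // gt_eqF.
have [rho [rho0 rhoa]] : exists rho : R, 0 < rho /\ (rho%:E <= alpha)%E.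
  case: alpha a0 {Hsr} => [a| |] a0; [by exists a | exists 1; split => // | by []].
  exact: leey.
have [eps eps0 Heps] : exists2 eps : R, 0 < eps &
    forall xi, is_dual xi -> dnorm xi < eps -> subdiff_inv f xi `&` ball xbar rho !=set0.
  apply: lhc; first exact: ball_open.
  by exists xbar; split => //; exact: ballxx.
have key xi : is_dual xi -> dnorm xi < eps -> forall y,
    ((fb + xi (y - xbar) - kap * (dnorm xi * dnorm xi `^ (q / p)))%:E <= f y)%E.
  move=> dual dlt y; have [xs [[_ Hmin] Vxs]] := Heps xi dual dlt.
  have [dn0 db] := dual_bound _ dual.
  have hxs : (`|xs - xbar| <= kap * dnorm xi `^ (q / p)).
    have ex : eball xbar alpha xs.
      rewrite /eball /= (le_trans _ rhoa) // lee_fin distrC ltW //.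
      by move: Vxs; rewrite -ball_normE.
    have := Hsr xs ex.
    have Dub : (dist0 (subdiff f) xs <= (dnorm xi)%:E)%E.
      by apply: ge_ereal_inf; exists ((dnorm xi)%:E) => //; exists xi.
    have Dlb : (0 <= dist0 (subdiff f) xs)%E.
      apply: le_ereal_inf_tmp => _ [z [dz _] <-].
      by rewrite lee_fin; case: (dual_bound _ dz).
    case E: (dist0 (subdiff f) xs) Dub Dlb => [d| |] //; rewrite !lee_fin => Dub Dlb.
    move=> h; apply: (le_trans h).
    apply: ler_wpM2l; first exact: ltW.
    apply: (ge0_ler_powR (ltW lam0)); rewrite ?nnegrE //.
  have hxi : xi (xs - xbar) <= kap * (dnorm xi * dnorm xi `^ (q / p)).
    apply: (le_trans (ler_norm _)); apply: (le_trans (db _)).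
    by rewrite mulrCA; apply: ler_wpM2l.
  have Hm := Hmin y; have Hb := H0.2 xs; rewrite /= !sube0 efb in Hb.
  case Ey : (f y) Hm => [fy| |]; [ | by move=> _; exact: leey | by case: hprop => /(_ y); rewrite Ey].
  case Exs : (f xs) Hb => [fxs| |] Hb; last by case: hprop => /(_ xs); rewrite Exs.
    rewrite -!EFinD !lee_fin in Hb * => Hm.
    move: hxi; rewrite (dual_sub xi xs xbar dual) (dual_sub xi y xbar dual) => hxi; lra.
  by rewrite /= leNgt -EFinD ltey.
pose c := (2 * kap)^-1.
have c0 : 0 < c by rewrite invr_gt0 mulr_gt0.
have kc : kap * c = 2^-1 by rewrite /c invfM mulrCA mulfV ?gt_eqF // mulr1.
set E := (eps / 2) `^ (q / p).
have E0 : 0 < E by rewrite powR_gt0 // divr_gt0.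
exists (2 * kap * E)%:E, (c `^ (p - 1) / 2); split.
  by rewrite lte_fin !mulr_gt0.
split; first by rewrite divr_gt0 // powR_gt0.
move=> y; rewrite /eball /= lee_fin => hy.
set r := `|y - xbar|; have r0 : 0 <= r by rewrite /r normr_ge0.
have rc0 : 0 <= r * c by rewrite mulr_ge0 // ltW.
set t := (r * c) `^ (p - 1).
have t0 : 0 <= t by rewrite powR_ge0.
have p10 : 0 <= p - 1 by rewrite subr_ge0 ltW.
have tlt : t < eps.
  have : t <= (2 * kap * E * c) `^ (p - 1).
    apply: (ge0_ler_powR p10); rewrite ?nnegrE //.
      by rewrite !mulr_ge0 // ltW.
    by rewrite ler_wpM2r // ltW.
  have -> : 2 * kap * E * c = E.
    by rewrite /c mulrAC mulfV ?mul1r // gt_eqF // mulr_gt0.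
  rewrite /E -powRrM [q / p * _]mulrC hpq powRr1; last by rewrite divr_ge0 // ltW.
  move=> h; apply: (le_lt_trans h); rewrite ltr_pdivrMr // ltr_pMr //.
  by rewrite -[1]/(1%:R) ltr_nat.
have [xi [dual dn xv]] := norming (y - xbar) t t0.
have hk := key xi dual (le_lt_trans dn tlt) y.
have [dn0 _] := dual_bound _ dual.
have hD : kap * (dnorm xi * dnorm xi `^ (q / p)) <= t * r / 2.
  have : dnorm xi * dnorm xi `^ (q / p) <= t * t `^ (q / p).
    apply: ler_pM => //; first exact: powR_ge0.
    by apply: (ge0_ler_powR (ltW lam0)); rewrite ?nnegrE.
  rewrite /t -powRrM hpq powRr1 // => h.
  apply: (le_trans (ler_wpM2l (ltW k0) h)).
  set T := (r * c) `^ (p - 1).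
  have -> : kap * (T * (r * c)) = T * r * (kap * c) by ring.
  by rewrite kc.
have hg : c `^ (p - 1) / 2 * r `^ p = t * r / 2.
  rewrite /t powRM ?(ltW c0) // -(mulr_powRB1 r0 p0); ring.
rewrite efb -EFinD; apply: le_trans hk; rewrite lee_fin.
rewrite xv -/r; lra.
Qed.

Theorem corollary4p2 (R : realType) (X : normedModType R)
  (f : X -> \bar R) (xbar : X) (p q : R) :
  proper_fun f ->
  subdiff_inv f (fun _ => 0) xbar ->
  1 < p -> 1 < q -> p^-1 + q^-1 = 1 ->
  lhc_at0 (subdiff_inv f) ->
  ((exists (delta : \bar R) (gamma : R),
      (0 < delta)%E /\ 0 < gamma /\
      forall x, eball xbar delta x ->
        (f x >= f xbar + (gamma * powR (`|x - xbar|) p)%:E)%E)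
   <->
   (exists (alpha : \bar R) (kappa : R),
      strongly_subregular (subdiff f) (q / p) xbar alpha kappa)).
Proof.
move=> hp H0 p1 q1 pq lhc; split.
  exact: (dir12 _ _ _ _ _ _ hp H0 p1 q1 pq).
exact: (dir21 _ _ _ _ _ _ hp H0 p1 q1 pq lhc).
Qed.
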